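(* For given cardinality vectors $\boldsymbol\varrho,\boldsymbol\varphi,\boldsymbol\psi$, the expected number of edges of the primary IDNC graph is \[ \mathbb E\big[|\mathcal E_\rho|\big]=\frac12\sum_{i=1}^M\psi_i\Bigg\{\sum_{k=1,k\ne i}^M\frac{\psi_k}{N}\Big(1+\frac{\varrho_k\varrho_i}{N-1}\Big)\Bigg\}. \]
   Context: A sender holds a frame $\mathcal N$ of $N\ge2$ packets and serves receivers $\mathcal M=\{1,\dots,M\}$. For each receiver $i$ there are sets $\mathcal H_i\subseteq\mathcal N$ (Has set), $\mathcal L_i=\mathcal N\setminus\mathcal H_i$ (Lacks set) and $\mathcal W_i\subseteq\mathcal L_i$ (Wants set), with cardinalities $\varrho_i=|\mathcal H_i|$, $\varphi_i=N-\varrho_i$, $\psi_i=|\mathcal W_i|$. The primary IDNC graph $\mathcal G_\rho$ has a vertex $v_{ij}$ for every receiver $i$ and every $j\in\mathcal W_i$; two distinct vertices $v_{ij},v_{kl}$ are adjacent iff (C1) $j=l$, or (C2) $j\in\mathcal H_k$ and $l\in\mathcal H_i$. $\mathcal E_\rho$ is its edge set. Expectations are taken in the model that ignores set contents: given the cardinalities, the pairs $(\mathcal H_k,\mathcal W_k)$, $k\in\mathcal M$, are independent, $\mathcal H_k$ is a uniformly random $\varrho_k$-element subset of $\mathcal N$, and given $\mathcal H_k$, $\mathcal W_k$ is a uniformly random $\psi_k$-element subset of $\mathcal N\setminus\mathcal H_k$. *)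

(* Defs.v *)
From mathcomp Require Import all_boot all_order all_algebra.
Set Implicit Arguments. Unset Strict Implicit. Unset Printing Implicit Defensive.
Import Order.TTheory GRing.Theory Num.Theory.

(* Packets: 'I_N ; receivers: 'I_M.  A configuration assigns to each receiver k
   a pair (H_k, W_k) of packet sets (Has set, Wants set). *)
Definition config (M N : nat) := {ffun 'I_M -> {set 'I_N} * {set 'I_N}}.

Definition Hs M N (c : config M N) (k : 'I_M) : {set 'I_N} := (c k).1.
Definition Ws M N (c : config M N) (k : 'I_M) : {set 'I_N} := (c k).2.

Definition idnc_vertices M N (c : config M N) : {set 'I_M * 'I_N} :=
  [set v | v.2 \in Ws c v.1].

Definition idnc_adj M N (c : config M N) (u v : 'I_M * 'I_N) : bool :=
  (u.2 == v.2) || ((u.2 \in Hs c v.1) && (v.2 \in Hs c u.1)).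

Definition idnc_edges M N (c : config M N) : {set {set 'I_M * 'I_N}} :=
  [set e : {set 'I_M * 'I_N} | (e \subset idnc_vertices c) && (#|e| == 2) &&
     [forall u in e, forall v in e, (u != v) ==> idnc_adj c u v]].

Definition valid_pair N (rho psi : nat) (p : {set 'I_N} * {set 'I_N}) : bool :=
  [&& #|p.1| == rho, p.2 \subset ~: p.1 & #|p.2| == psi].

(* Probability of a configuration in the model: independent over receivers,
   H_k uniform among rho_k-subsets of the N packets, and given H_k, W_k uniform
   among psi_k-subsets of N \ H_k (which has N - rho_k elements). *)
Definition config_prob (R : numFieldType) M N (rho psi : 'I_M -> nat)
    (c : config M N) : R :=
  \prod_(k : 'I_M)
     (if valid_pair (rho k) (psi k) (c k)
      then ('C(N, rho k)%:R)^-1 * ('C(N - rho k, psi k)%:R)^-1 else 0).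

Definition expected_edges (R : numFieldType) M N (rho psi : 'I_M -> nat) : R :=
  \sum_(c : config M N) config_prob R rho psi c * #|idnc_edges c|%:R.

(* Main.v *)
Require Import Defs.
From mathcomp Require Import all_boot all_order all_algebra all_fingroup.
Import Order.TTheory GRing.Theory Num.Theory.
Set Implicit Arguments. Unset Strict Implicit. Unset Printing Implicit Defensive.

Definition pT N := ({set 'I_N} * {set 'I_N})%type.
Definition S N r s (f : pT N -> nat) : nat :=
  \sum_(p : pT N) valid_pair r s p * f p.

Lemma valid_perm N r s (sg : {perm 'I_N}) (p : pT N) :
  valid_pair r s (sg @: p.1, sg @: p.2) = valid_pair r s p.
Proof.
rewrite /valid_pair /= !card_imset; try exact: perm_inj.
case: (#|p.1| == r) => //=; case: (#|p.2| == s); rewrite ?andbF ?andbT //.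
apply/subsetP/subsetP => H x.
  move=> xW; have := H (sg x); rewrite !inE !mem_imset //; try exact: perm_inj.
  by move/(_ xW).
move=> /imsetP [y yW ->]; rewrite !inE mem_imset; last exact: perm_inj.
by have := H y yW; rewrite inE.
Qed.

Lemma S_perm N r s (sg : {perm 'I_N}) f :
  S r s (fun p => f (sg @: p.1, sg @: p.2)) = S r s f.
Proof.
rewrite /S [RHS](reindex_inj (h := fun p : pT N => (sg @: p.1, sg @: p.2))).
  by apply: eq_bigr => p _; rewrite valid_perm.
move=> [a b] [c d] /= [] /(imset_inj (@perm_inj _ sg)) -> /(imset_inj (@perm_inj _ sg)) ->.
done.
Qed.

Lemma S_lin N r s (g : 'I_N -> pT N -> nat) :
  \sum_j S r s (g j) = S r s (fun p => \sum_j g j p).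
Proof.
rewrite /S exchange_big /=; apply: eq_bigr => p _; by rewrite big_distrr.
Qed.

Lemma S_ext N r s (f g : pT N -> nat) :
  (forall p, valid_pair r s p -> f p = g p) -> S r s f = S r s g.
Proof. move=> H; apply: eq_bigr => p _; case: (boolP (valid_pair r s p)) => // /H -> //. Qed.

Lemma S_scal N r s (f : pT N -> nat) c : S r s (fun p => c * f p) = c * S r s f.
Proof. rewrite /S big_distrr; apply: eq_bigr => p _; by rewrite mulnCA. Qed.

Lemma S1 N r s : S r s (fun _ : pT N => 1) = 'C(N, r) * 'C(N - r, s).
Proof.
rewrite /S -(pair_big xpredT xpredT (fun H W => valid_pair r s (H, W) * 1)) /=.
transitivity (\sum_(H : {set 'I_N}) (#|H| == r) * 'C(N - r, s)).
  apply: eq_bigr => H _.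
  transitivity ((#|H| == r) * #|[set W : {set 'I_N} | W \subset ~: H & #|W| == s]|).
    rewrite -[#|[set W | _ & _]|]sum1_card big_distrr /= [RHS]big_mkcond /=.
    apply: eq_bigr => W _.
    by rewrite /valid_pair /= inE; case: (#|H| == r); case: (W \subset ~: H); case: (#|W| == s).
  rewrite cards_draws; case: eqP => // <-.
  by rewrite -[N in N - _](card_ord N) -(cardsC H) addKn.
rewrite -big_distrl /=; congr (_ * _).
rewrite -[N in 'C(N, _)](card_ord N) -card_draws -[#|[set _ | _]|]sum1_card [RHS]big_mkcond /=; apply: eq_bigr => H _.
by rewrite inE; case: (_ == _).
Qed.

Lemma sum_mem N (A : {set 'I_N}) : \sum_i (i \in A : nat) = #|A|.
Proof. by rewrite -sum1_card [RHS]big_mkcond; apply: eq_bigr => k _; case: (k \in A). Qed.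

Definition E1 N r s (j : 'I_N) := S r s (fun p => j \in p.2).
Definition E2 N r s (j l : 'I_N) := S r s (fun p => (j \in p.2) * (l \in p.1)).

Lemma E1_perm N r s (sg : {perm 'I_N}) j : E1 r s (sg j) = E1 r s j.
Proof.
rewrite /E1 -(S_perm r s sg (fun p => sg j \in p.2)) /=.
by apply: S_ext => p _; rewrite mem_imset //; exact: perm_inj.
Qed.

Lemma E2_perm N r s (sg : {perm 'I_N}) j l : E2 r s (sg j) (sg l) = E2 r s j l.
Proof.
rewrite /E2 -(S_perm r s sg (fun p => (sg j \in p.2) * (sg l \in p.1))) /=.
by apply: S_ext => p _; rewrite !mem_imset //; exact: perm_inj.
Qed.

Lemma E1_const N r s (j j' : 'I_N) : E1 r s j = E1 r s j'.
Proof. by rewrite -(E1_perm r s (tperm j j') j) tpermL. Qed.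

Lemma E2_const N r s (j l j' l' : 'I_N) : j != l -> j' != l' ->
  E2 r s j l = E2 r s j' l'.
Proof.
move=> djl djl'.
rewrite -(E2_perm r s (tperm j j') j l) tpermL.
set l1 := tperm j j' l.
have d1 : l1 != j'.
  by rewrite /l1 -{2}(tpermL j j') (inj_eq (@perm_inj _ _)) eq_sym.
rewrite -(E2_perm r s (tperm l1 l') j' l1) tpermL tpermD //.
by rewrite eq_sym.
Qed.

Lemma E1_val N r s (j : 'I_N) : N * E1 r s j = s * S r s (fun _ : pT N => 1).
Proof.
rewrite -{1}(card_ord N) -sum_nat_const.
rewrite (eq_bigr (fun j' => E1 r s j')); last by move=> j' _; apply: E1_const.
rewrite /E1 S_lin -S_scal; apply: S_ext => p /and3P [_ _ /eqP <-].
by rewrite muln1 -sum1_card [RHS]big_mkcond; apply: eq_bigr => k _; case: (k \in p.2).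
Qed.

Lemma E2_diag N r s (j : 'I_N) : E2 r s j j = 0.
Proof.
rewrite /E2 (S_ext (g := fun _ => 0)) /S; last first.
  move=> p /and3P [_ /subsetP sub _].
  by case: (boolP (j \in p.2)) => // /sub; rewrite inE => /negbTE ->.
by rewrite big1 // => p _; rewrite muln0.
Qed.

Lemma E2_val N r s (j l : 'I_N) : j != l ->
  N * N.-1 * E2 r s j l = s * r * S r s (fun _ : pT N => 1).
Proof.
move=> djl.
transitivity (\sum_(j' : 'I_N) \sum_(l' : 'I_N) E2 r s j' l').
  have H : forall j' : 'I_N, \sum_l' E2 r s j' l' = N.-1 * E2 r s j l.
    move=> j'.
    rewrite (bigD1 j') //= E2_diag add0n.
    rewrite (eq_bigr (fun _ => E2 r s j l)); last first.
      by move=> l' dl; apply: E2_const; rewrite // eq_sym.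
    by rewrite sum_nat_const cardC1 card_ord.
  by rewrite (eq_bigr _ (fun j' _ => H j')) sum_nat_const card_ord mulnA.
rewrite /E2.
under eq_bigr do rewrite S_lin.
rewrite S_lin -S_scal; apply: S_ext => p /and3P [/eqP <- _ /eqP <-].
rewrite muln1 -!sum_mem big_distrl /=; apply: eq_bigr => j' _.
by rewrite big_distrr.
Qed.

From mathcomp Require Import ring.
Local Open Scope ring_scope.

Definition w (R : numFieldType) N r s (p : pT N) : R :=
  if valid_pair r s p then ('C(N, r)%:R)^-1 * ('C(N - r, s)%:R)^-1 else 0.

Lemma wS (R : numFieldType) N r s (f : pT N -> nat) :
  \sum_p w R r s p * (f p)%:R =
  ('C(N, r)%:R)^-1 * ('C(N - r, s)%:R)^-1 * (S r s f)%:R.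
Proof.
rewrite /S natr_sum mulr_sumr; apply: eq_bigr => p _.
by rewrite /w natrM; case: (valid_pair r s p); rewrite ?mul1r ?mul0r ?mulr0.
Qed.

Lemma natr_neq0 (R : numFieldType) n : (0 < n)%N -> (n%:R : R) != 0.
Proof. by rewrite pnatr_eq0 -lt0n. Qed.

Lemma w1 (R : numFieldType) N r s : (r <= N)%N -> (s <= N - r)%N ->
  \sum_(p : pT N) w R r s p = 1.
Proof.
move=> hr hs.
have := wS R r s (fun _ : pT N => 1%N); rewrite S1.
under eq_bigr do rewrite mulr1.
move=> ->; rewrite natrM; field.
by rewrite !natr_neq0 // bin_gt0.
Qed.

Lemma wE1 (R : numFieldType) N r s (j : 'I_N) : (r <= N)%N -> (s <= N - r)%N ->
  \sum_(p : pT N) w R r s p * (j \in p.2)%:R = s%:R / N%:R.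
Proof.
move=> hr hs.
have hN : (0 < N)%N by case: N j {hr hs} => [[]|].
have h := congr1 (fun n : nat => n%:R : R) (E1_val r s j).
rewrite /= !natrM S1 natrM in h.
rewrite (wS R r s (fun p => j \in p.2)) -/(E1 r s j).
have -> : (E1 r s j)%:R = s%:R * ('C(N, r)%:R * 'C(N - r, s)%:R) / N%:R :> R.
  by rewrite -h; field; rewrite natr_neq0.
field.
by rewrite !natr_neq0 // bin_gt0.
Qed.

Lemma wE2 (R : numFieldType) N r s (j l : 'I_N) : (2 <= N)%N ->
  (r <= N)%N -> (s <= N - r)%N ->
  \sum_(p : pT N) w R r s p * ((j \in p.2) * (l \in p.1))%:R
   = (j != l)%:R * (s * r)%:R / (N * N.-1)%:R.
Proof.
move=> hN hr hs.
rewrite (wS R r s (fun p => (j \in p.2) * (l \in p.1))%N) -/(E2 r s j l).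
have hN1 : (0 < N * N.-1)%N by rewrite muln_gt0; case: N hN {j l hr hs} => [|[|]].
have hN0 : (N%:R : R) != 0 by rewrite natr_neq0 //; case: N hN {j l hr hs hN1}.
have hN10 : (N.-1%:R : R) != 0 by rewrite natr_neq0 //; case: N hN {j l hr hs hN1 hN0} => [|[]].
case: (eqVneq j l) => [<-|djl].
  by rewrite E2_diag !mul0r mulr0.
have h := congr1 (fun n : nat => n%:R : R) (E2_val r s djl).
rewrite /= !natrM S1 natrM in h.
have -> : (E2 r s j l)%:R = s%:R * r%:R * ('C(N, r)%:R * 'C(N - r, s)%:R) / (N%:R * N.-1%:R) :> R.
  by rewrite -h; field; rewrite hN0 hN10.
rewrite /= mul1r !natrM; field.
by rewrite hN0 hN10 !natr_neq0 // bin_gt0.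
Qed.

Definition Padj M N (c : config M N) (u v : 'I_M * 'I_N) : bool :=
  [&& u \in idnc_vertices c, v \in idnc_vertices c, u != v & idnc_adj c u v].

Lemma adj_sym M N (c : config M N) u v : idnc_adj c u v = idnc_adj c v u.
Proof. by rewrite /idnc_adj eq_sym andbC. Qed.

Lemma pair_in_edges M N (c : config M N) (u v : 'I_M * 'I_N) :
  Padj c u v -> [set u; v] \in idnc_edges c.
Proof.
move=> /and4P [uV vV uv adj].
rewrite inE cards2 uv /=; apply/andP; split.
  by rewrite andbT; apply/subsetP => x /set2P [] ->.
apply/forallP => x; apply/implyP => /set2P hx.
apply/forallP => y; apply/implyP => /set2P hy; apply/implyP => xy.
case: hx hy xy => -> [] -> //; rewrite ?eqxx // => _.
by rewrite adj_sym.
Qed.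

Lemma count2 (T : finType) (a b : T) : a != b ->
  (\sum_(p : T * T | [&& p.1 \in [set a; b], p.2 \in [set a; b] & p.1 != p.2]) 1 = 2)%N.
Proof.
move=> ab.
rewrite (eq_bigl (fun p => p \in [set (a, b); (b, a)])); last first.
  move=> [x y] /=; apply/idP/idP.
    case/and3P => /set2P [] -> /set2P [] ->; rewrite ?eqxx //= => _;
      by rewrite !inE eqxx ?orbT.
  rewrite !inE !xpair_eqE => /orP [] /andP [/eqP -> /eqP ->];
    by rewrite !eqxx ?orbT /= ?ab // eq_sym ab.
rewrite sum1_card cards2 xpair_eqE (negbTE ab) //.
Qed.

Lemma edges2 M N (c : config M N) :
  (#|idnc_edges c| * 2 = \sum_u \sum_v Padj c u v)%N.
Proof.
rewrite pair_big /=.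
transitivity (\sum_(p | Padj c p.1 p.2) 1)%N; last first.
  by rewrite big_mkcond; apply: eq_bigr => p _; case: (Padj c p.1 p.2).
rewrite (partition_big (fun p => [set p.1; p.2]) (fun e => e \in idnc_edges c));
  last by move=> p; apply: pair_in_edges.
rewrite -sum_nat_const; apply: eq_bigr => e eE.
have := eE; rewrite /idnc_edges inE => /andP [/andP [eV /cards2P [a [b [ab eab]]]] /forallP adjE].
rewrite -(count2 ab) -eab; apply: eq_bigl => [[u v]] /=.
apply/idP/idP; last first.
  rewrite /Padj; case/andP => /and4P [_ _ uv _] /eqP <-.
  by rewrite set21 set22 uv.
move=> /and3P [ue ve uv].
have sV := subsetP eV.
have := adjE u; move=> /implyP /(_ ue) /forallP /(_ v) /implyP /(_ ve) /implyP /(_ uv) adj.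
rewrite /Padj (sV _ ue) (sV _ ve) uv adj /=.
rewrite eqEcard cards2 uv eab cards2 ab andbT.
by apply/subsetP => x /set2P [] ->; rewrite -eab.
Qed.

Lemma Padj_val M N (rho psi : 'I_M -> nat) (c : config M N)
  (hv : forall m, valid_pair (rho m) (psi m) (c m)) i j k l :
  (Padj c (i, j) (k, l) : nat) =
  ((i != k) * ((j \in (c i).2) * ((l \in (c k).2) * (j == l))
     + ((j \in (c i).2) * (l \in (c i).1)) * ((l \in (c k).2) * (j \in (c k).1))))%N.
Proof.
have dis : forall m x, x \in (c m).2 -> (x \in (c m).1) = false.
  move=> m x; have /and3P [_ /subsetP sub _] := hv m.
  by move=> /sub; rewrite inE => /negbTE.
rewrite /Padj /idnc_vertices /idnc_adj /Ws /Hs !inE /= xpair_eqE.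
case: (eqVneq i k) => [<-|ik] /=.
  case jW: (j \in (c i).2) => //=; case lW: (l \in (c i).2) => //=.
  by rewrite (dis _ _ jW) /= ?andbF; case: (eqVneq j l).
rewrite mul1n.
case jW: (j \in (c i).2) => //=; case lW: (l \in (c k).2) => //=;
  rewrite ?mul1n ?muln1 ?mul0n ?muln0 //.
case: (eqVneq j l) => [<-|jl] /=.
  by rewrite (dis _ _ jW).
by rewrite add0n; case: (j \in (c k).1); case: (l \in (c i).1).
Qed.

Lemma prod2 (R : numFieldType) M (i k : 'I_M) (x y : 'I_M -> R) : i != k ->
  \prod_(m : 'I_M) (if m == i then x m else if m == k then y m else 1) = x i * y k.
Proof.
move=> ik.
rewrite (bigD1 i) //= eqxx (bigD1 k) //=; last by rewrite eq_sym.
rewrite eq_sym (negbTE ik) eqxx big1 ?mulr1 // => m /andP [mi mk].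
by rewrite (negbTE mi) (negbTE mk).
Qed.

Lemma cprob_w (R : numFieldType) M N (rho psi : 'I_M -> nat) (c : config M N) :
  config_prob R rho psi c = \prod_m w R (rho m) (psi m) (c m).
Proof. by []. Qed.

Lemma fact2 (R : numFieldType) M N (rho psi : 'I_M -> nat) (i k : 'I_M)
  (f g : pT N -> R) :
  i != k -> (forall m, \sum_(p : pT N) w R (rho m) (psi m) p = 1) ->
  \sum_(c : config M N) config_prob R rho psi c * (f (c i) * g (c k)) =
  (\sum_p w R (rho i) (psi i) p * f p) * (\sum_p w R (rho k) (psi k) p * g p).
Proof.
move=> ik h1.
pose F (m : 'I_M) (p : pT N) :=
  w R (rho m) (psi m) p * (if m == i then f p else if m == k then g p else 1).
have : \prod_(m : 'I_M) \sum_(p : pT N) F m p =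
   \sum_(c : {ffun 'I_M -> pT N}) \prod_m F m (c m) by exact: bigA_distr_bigA.
rewrite (eq_bigr (fun m => if m == i then \sum_p w R (rho i) (psi i) p * f p
   else if m == k then \sum_p w R (rho k) (psi k) p * g p else 1)); last first.
  move=> m _; rewrite /F; case: (eqVneq m i) => [->|mi] //.
  case: (eqVneq m k) => [->|mk] //.
  by rewrite -[RHS](h1 m); apply: eq_bigr => p _; rewrite mulr1.
rewrite (prod2 (fun=> _) (fun=> _) ik) => ->.
apply: eq_bigr => c _.
rewrite /F big_split /= -cprob_w; congr (_ * _).
by rewrite (prod2 (fun m => f (c m)) (fun m => g (c m)) ik).
Qed.

Definition Tn M N (c : config M N) i j k l : nat :=
  ((i != k) * ((j \in (c i).2) * ((l \in (c k).2) * (j == l))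
     + ((j \in (c i).2) * (l \in (c i).1)) * ((l \in (c k).2) * (j \in (c k).1))))%N.

Lemma stepA (R : numFieldType) M N (rho psi : 'I_M -> nat) (c : config M N) :
  config_prob R rho psi c * #|idnc_edges c|%:R =
  2^-1 * (config_prob R rho psi c *
    \sum_i \sum_j \sum_k \sum_l (Tn c i j k l)%:R).
Proof.
case: (boolP [forall m, valid_pair (rho m) (psi m) (c m)]) => [/forallP hv|/forallPn [m hm]];
  last by rewrite cprob_w (bigD1 m) //= /w (negbTE hm) !mul0r mulr0.
rewrite mulrCA; congr (_ * _).
have h : (\sum_u \sum_v Padj c u v = \sum_i \sum_j \sum_k \sum_l Tn c i j k l)%N.
  rewrite [RHS]pair_big /=; apply: eq_bigr => [[i j]] _ /=.
  rewrite [RHS]pair_big /=; apply: eq_bigr => [[k l]] _ /=.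
  exact: (Padj_val hv).
have e := congr1 (fun n : nat => n%:R : R) (edges2 c); rewrite /= h natrM in e.
have -> : (\sum_i \sum_j \sum_k \sum_l (Tn c i j k l)%:R : R) =
          (\sum_i \sum_j \sum_k \sum_l Tn c i j k l)%:R.
  rewrite natr_sum; apply: eq_bigr => i _; rewrite natr_sum; apply: eq_bigr => j _.
  rewrite natr_sum; apply: eq_bigr => k _; by rewrite natr_sum.
rewrite -e; field.
by [].
Qed.

Lemma stepC (R : numFieldType) M N (rho psi : 'I_M -> nat)
  (hN : (2 <= N)%N) (hrho : forall k, (rho k <= N)%N)
  (hpsi : forall k, (psi k <= N - rho k)%N) (i k : 'I_M) (j l : 'I_N) :
  \sum_(c : config M N) config_prob R rho psi c * (Tn c i j k l)%:R =
  (i != k)%:R * ((psi i)%:R / N%:R * ((j == l)%:R * ((psi k)%:R / N%:R))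
    + ((j != l)%:R * (psi i * rho i)%:R / (N * N.-1)%:R)
      * ((l != j)%:R * (psi k * rho k)%:R / (N * N.-1)%:R)).
Proof.
have h1 : forall m, \sum_(p : pT N) w R (rho m) (psi m) p = 1.
  by move=> m; apply: w1.
case: (eqVneq i k) => [<-|ik].
  by rewrite /Tn eqxx mul0r big1 // => c _; rewrite mul0n mulr0.
rewrite mul1r.
transitivity (\sum_(c : config M N) config_prob R rho psi c *
     ((fun p : pT N => (j \in p.2)%:R) (c i) *
      (fun p : pT N => (l \in p.2)%:R * (j == l)%:R) (c k))
  + \sum_(c : config M N) config_prob R rho psi c *
     ((fun p : pT N => (j \in p.2)%:R * (l \in p.1)%:R) (c i) *
      (fun p : pT N => (l \in p.2)%:R * (j \in p.1)%:R) (c k))).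
  rewrite -big_split; apply: eq_bigr => c _ /=.
  by rewrite /Tn ik mul1n -mulrDr natrD !natrM.
rewrite (fact2 (fun p : pT N => (j \in p.2)%:R)
   (fun p : pT N => (l \in p.2)%:R * (j == l)%:R) ik h1).
rewrite (fact2 (fun p : pT N => (j \in p.2)%:R * (l \in p.1)%:R)
   (fun p : pT N => (l \in p.2)%:R * (j \in p.1)%:R) ik h1).
rewrite (wE1 R j (hrho i) (hpsi i)).
have -> : \sum_p w R (rho k) (psi k) p * ((l \in p.2)%:R * (j == l)%:R)
    = (j == l)%:R * ((psi k)%:R / N%:R).
  rewrite -(wE1 R l (hrho k) (hpsi k)) mulr_sumr; apply: eq_bigr => p _.
  by rewrite mulrA mulrC mulrA.
have -> : \sum_p w R (rho i) (psi i) p * ((j \in p.2)%:R * (l \in p.1)%:R)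
    = (j != l)%:R * (psi i * rho i)%:R / (N * N.-1)%:R.
  rewrite -(wE2 R j l hN (hrho i) (hpsi i)); apply: eq_bigr => p _.
  by rewrite natrM.
have -> : \sum_p w R (rho k) (psi k) p * ((l \in p.2)%:R * (j \in p.1)%:R)
    = (l != j)%:R * (psi k * rho k)%:R / (N * N.-1)%:R.
  rewrite -(wE2 R l j hN (hrho k) (hpsi k)); apply: eq_bigr => p _.
  by rewrite natrM.
by [].
Qed.

Lemma sum_neq (R : numFieldType) N (j : 'I_N) (b : R) :
  \sum_(l : 'I_N | l != j) b = N.-1%:R * b.
Proof. by rewrite sumr_const cardC1 card_ord mulr_natl. Qed.

Definition Vf (R : numFieldType) M N (rho psi : 'I_M -> nat) (i k : 'I_M) (j l : 'I_N) : R :=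
  (i != k)%:R * ((psi i)%:R / N%:R * ((j == l)%:R * ((psi k)%:R / N%:R))
    + ((j != l)%:R * (psi i * rho i)%:R / (N * N.-1)%:R)
      * ((l != j)%:R * (psi k * rho k)%:R / (N * N.-1)%:R)).

Unset Implicit Arguments.

Theorem theorem4 (R : realFieldType) (M N : nat) (rho psi : 'I_M -> nat)
    (hN : (2 <= N)%N)
    (hrho : forall k, (rho k <= N)%N)
    (hpsi : forall k, (psi k <= N - rho k)%N) :
  @expected_edges R M N rho psi =
    2^-1 * \sum_(i : 'I_M) (psi i)%:R *
      (\sum_(k : 'I_M | k != i)
          (psi k)%:R / N%:R * (1 + (rho k)%:R * (rho i)%:R / (N.-1)%:R)).
Proof.
transitivity (2^-1 * \sum_(i : 'I_M) \sum_(j : 'I_N) \sum_(k : 'I_M) \sum_(l : 'I_N)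
   Vf R rho psi i k j l).
  rewrite /expected_edges (eq_bigr _ (fun c _ => stepA R rho psi c)) -mulr_sumr.
  congr (_ * _).
  under eq_bigr do rewrite mulr_sumr.
  rewrite exchange_big; apply: eq_bigr => i _.
  under eq_bigr do rewrite mulr_sumr.
  rewrite exchange_big; apply: eq_bigr => j _.
  under eq_bigr do rewrite mulr_sumr.
  rewrite exchange_big; apply: eq_bigr => k _.
  under eq_bigr do rewrite mulr_sumr.
  rewrite exchange_big; apply: eq_bigr => l _.
  exact: stepC.
congr (_ * _); apply: eq_bigr => i _.
rewrite exchange_big /= mulr_sumr [RHS]big_mkcond /=; apply: eq_bigr => k _.
case: (eqVneq k i) => [->|ki].
  rewrite /= big1 // => j _; rewrite big1 // => l _.
  by rewrite /Vf eqxx mul0r.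
rewrite /=.
have ik : (i != k) by rewrite eq_sym.
have hN0 : (N%:R : R) != 0 by rewrite pnatr_eq0 -lt0n; apply: leq_trans hN.
have hN10 : (N.-1%:R : R) != 0 by rewrite pnatr_eq0 -lt0n -subn1 subn_gt0.
set a : R := (psi i)%:R / N%:R * ((psi k)%:R / N%:R).
set b : R := (psi i * rho i)%:R / (N * N.-1)%:R * ((psi k * rho k)%:R / (N * N.-1)%:R).
have inner : forall j : 'I_N, \sum_(l : 'I_N) Vf R rho psi i k j l = a + N.-1%:R * b.
  move=> j; rewrite (bigD1 j) //= /Vf eqxx ik /= !mul1r !mul0r addr0.
  rewrite -/a; congr (_ + _); rewrite -(sum_neq j b); apply: eq_bigr => l lj.
  have jl : j != l by rewrite eq_sym.
  by rewrite jl lj (negbTE jl) !mul1r !mul0r mulr0 add0r.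
rewrite (eq_bigr _ (fun j _ => inner j)) sumr_const card_ord /a /b.
rewrite -mulr_natr !natrM.
field.
by rewrite hN0 hN10.
Qed.
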